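(* Let $F\subset\mathbb{R}$ be closed and define $f\colon[0,\infty)\to[-\infty,0]$ by $f(\gamma)=-\inf_{a\in F}\ell(\gamma;a)$. If $F\subset(-\infty,0)$, then $f\equiv-\infty$. If $F\cap[0,\infty)\neq\emptyset$, then $f$ is real-valued and continuous on $(0,\infty)$, and $\lim_{\gamma\downarrow0}f(\gamma)=f(0)$, where $f(0)=0$ if $0\in F$ and $f(0)=-\infty$ if $0\notin F$. In any case, $f^{-1}([a,b])$ is closed for all $a,b\in(-\infty,0]$ with $a\le b$.
   Context: For $\gamma\ge0$: $\ell(\gamma;a)=\infty$ for $a<0$, $\ell(\gamma;0)=\gamma$, and $\ell(\gamma;a)=\gamma-a+a\log(a/\gamma)$ for $a>0$ (interpreted as $\infty$ when $\gamma=0$). *)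

(* Defs.v *)
From HB Require Import structures.
From mathcomp Require Import all_boot all_order all_algebra.
From mathcomp Require Import all_classical all_reals all_analysis.
Set Implicit Arguments. Unset Strict Implicit. Unset Printing Implicit Defensive.
Import Order.TTheory GRing.Theory Num.Theory.
Import numFieldNormedType.Exports.
Local Open Scope classical_set_scope.
Local Open Scope ring_scope.
Local Open Scope ereal_scope.

Definition ell {R : realType} (g a : R) : \bar R :=
  if (a < 0)%R then +oo
  else if a == 0%R then g%:E
  else if g == 0%R then +oo
  else (g - a + a * ln (a / g))%:E.

Definition fF {R : realType} (F : set R) (g : R) : \bar R :=
  - ereal_inf [set ell g a | a in F].

(* Main.v *)
Require Import Defs.
From HB Require Import structures.
From mathcomp Require Import all_boot all_order all_algebra.
From mathcomp Require Import all_classical all_reals all_analysis.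
From mathcomp Require Import lra ring.
Import Order.TTheory GRing.Theory Num.Theory.
Import numFieldNormedType.Exports.
Local Open Scope classical_set_scope.
Local Open Scope ring_scope.
Set Implicit Arguments. Unset Strict Implicit. Unset Printing Implicit Defensive.

Section S.
Variable R : realType.
Implicit Types g a : R.

Definition hh g a : R := g - a + a * ln (a / g).

Lemma ell_pos g a : 0 < g -> 0 <= a -> ell g a = (hh g a)%:E.
Proof.
move=> g0 a0; rewrite /ell /hh ltNge a0 /=.
have [->|an0] := eqVneq a 0; first by rewrite mul0r subr0 addr0.
by rewrite gt_eqF.
Qed.

Lemma ell_neg (g a : R) : a < 0 -> ell g a = +oo%E :> \bar R.
Proof. by rewrite /ell => ->. Qed.

Lemma ln_ge1 (x : R) : 0 < x -> 1 - x^-1 <= ln x.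
Proof.
move=> x0; have := le_ln1Dx (x := x^-1 - 1).
have -> : 1 + (x^-1 - 1) = x^-1 by rewrite addrC subrK.
rewrite lnV ?posrE // => h.
have : -1 < x^-1 - 1 by rewrite ltrBrDr addrC subrr invr_gt0.
move/h; lra.
Qed.

Lemma alnge (a b : R) : 0 < a -> 0 < b -> a - b <= a * ln (a / b).
Proof.
move=> a0 b0; have ab0 : 0 < a / b by rewrite divr_gt0.
have := (@ln_ge1 (a / b)) ab0; rewrite invf_div => h.
have : a * (1 - b / a) <= a * ln (a / b) by rewrite ler_pM2l.
by rewrite mulrBr mulr1 mulrCA divff ?gt_eqF // mulr1.
Qed.

Lemma hh_ge0 g a : 0 < g -> 0 <= a -> 0 <= hh g a.
Proof.
move=> g0; rewrite le_eqVlt => /orP[/eqP<-|a0]; rewrite /hh.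
  by rewrite mul0r subr0 addr0 ltW.
have := alnge a0 g0; lra.
Qed.

Definition KK : R := expR 2.

Lemma hh_bound g a : 0 < g -> 0 <= a -> a <= KK * g + hh g a.
Proof.
move=> g0 a0; have h0 := hh_ge0 g0 a0.
have [aK|Ka] := leP a (KK * g); first lra.
have Kpos : 0 < KK by rewrite /KK expR_gt0.
have apos : 0 < a by apply: lt_trans Ka; rewrite mulr_gt0.
have : 2 < ln (a / g).
  rewrite -[2]expRK ltr_ln ?posrE ?expR_gt0 ?divr_gt0 //.
  by rewrite ltr_pdivlMr // -/KK.
rewrite /hh => l2.
have : a * 2 <= a * ln (a / g) by rewrite ler_pM2l // ltW.
have : 0 <= KK * g by rewrite mulr_ge0 // ltW.
lra.
Qed.

Lemma hh_shift g g' a : 0 < g -> 0 < g' -> 0 <= a ->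
  hh g' a = hh g a + (g' - g) + a * (ln g - ln g').
Proof.
move=> g0 g'0; rewrite le_eqVlt => /orP[/eqP<-|a0]; rewrite /hh.
  by rewrite !mul0r; lra.
rewrite !ln_div ?posrE //; lra.
Qed.

Lemma ln_lip g g0 : 0 < g -> 0 < g0 -> g0 / 2 <= g ->
  `|ln g - ln g0| <= 2 * `|g - g0| / g0.
Proof.
move=> gp g0p hg.
have l1 := (@ln_ge1 (g/g0)) (divr_gt0 gp g0p).
have l2 := (@ln_ge1 (g0/g)) (divr_gt0 g0p gp).
rewrite !ln_div ?posrE // !invf_div in l1 l2.
have e1 : 1 - g0 / g = (g - g0) / g by rewrite mulrBl divff ?gt_eqF.
have e2 : 1 - g / g0 = (g0 - g) / g0 by rewrite mulrBl divff ?gt_eqF.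
rewrite e1 e2 in l1 l2.
have nd := ler_norm (g - g0).
have nd2 : g0 - g <= `|g - g0| by rewrite distrC ler_norm.
have n0 : 0 <= `|g - g0| by [].
have b1 : (g0 - g) / g <= 2 * `|g - g0| / g0.
  rewrite ler_pdivrMr //.
  have -> : 2 * `|g - g0| / g0 * g = `|g - g0| * (2 * g / g0) by ring.
  have t1 : 1 <= 2 * g / g0 by rewrite ler_pdivlMr // mul1r; lra.
  nra.
have b2 : (g - g0) / g0 <= 2 * `|g - g0| / g0.
  rewrite ler_pM2r ?invr_gt0 //; lra.
have e3 : (g0 - g) / g = - ((g - g0) / g) by rewrite -mulNr opprB.
rewrite e3 in b1.
rewrite ler_norml; apply/andP; split; lra.
Qed.

Lemma bnd_fine (x : \bar R) (r : R) : (0 <= x)%E -> (x <= r%:E)%E -> x = (fine x)%:E.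
Proof. by case: x. Qed.

Variable F : set R.
Definition SS g := [set ell g a | a in F].
Definition II g := fine (ereal_inf (SS g)).

Lemma inf_ge0 g : 0 < g -> (0 <= ereal_inf (SS g))%E.
Proof.
move=> g0; apply: le_ereal_inf_tmp => _ [a Fa <-].
have [an|ap] := ltP a 0; first by rewrite ell_neg.
by rewrite ell_pos // lee_fin hh_ge0.
Qed.

Lemma inf_le g a : 0 < g -> F a -> 0 <= a -> (ereal_inf (SS g) <= (hh g a)%:E)%E.
Proof.
move=> g0 Fa a0; apply: ereal_inf_lbound; exists a => //; exact: ell_pos.
Qed.

Variable a0 : R.
Hypothesis Fa0 : F a0.
Hypothesis a0p : 0 <= a0.

Lemma IIE g : 0 < g -> ereal_inf (SS g) = (II g)%:E.
Proof. move=> g0; exact: (bnd_fine (inf_ge0 g0) (inf_le g0 Fa0 a0p)). Qed.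

Lemma II_ge0 g : 0 < g -> 0 <= II g.
Proof. by move=> g0; have := inf_ge0 g0; rewrite IIE. Qed.

Lemma II_le g a : 0 < g -> F a -> 0 <= a -> II g <= hh g a.
Proof. by move=> g0 Fa ap; have := inf_le g0 Fa ap; rewrite IIE. Qed.

Lemma II_adh g e : 0 < g -> 0 < e -> exists a, [/\ F a, 0 <= a & hh g a < II g + e].
Proof.
move=> g0 e0; have := @lb_ereal_inf_adherent R (SS g) e e0.
rewrite IIE // => /(_ isT) [_ [a Fa <-]].
have [an|ap] := ltP a 0; first by rewrite ell_neg.
by rewrite ell_pos // -EFinD lte_fin => h; exists a.
Qed.

Lemma B1 g g' : 0 < g -> 0 < g' ->
  II g' <= II g + `|g' - g| + (KK * g + II g + 1) * `|ln g - ln g'|.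
Proof.
move=> g0 g'0; apply/ler_addgt0Pr => e e0.
have m0 : 0 < Num.min e 1 by rewrite lt_min e0 ltr01.
have [a [Fa ap ha]] := II_adh g0 m0.
have me : Num.min e 1 <= e by rewrite ge_min lexx.
have m1 : Num.min e 1 <= 1 by rewrite ge_min lexx orbT.
have ab := hh_bound g0 ap.
have sh := hh_shift g0 g'0 ap.
have l' := II_le g'0 Fa ap.
have h1 : a * (ln g - ln g') <= a * `|ln g - ln g'| by rewrite ler_wpM2l // ler_norm.
have h2 : a * `|ln g - ln g'| <= (KK * g + II g + 1) * `|ln g - ln g'|.
  rewrite ler_wpM2r //; lra.
have := ler_norm (g' - g); lra.
Qed.

Lemma II_lip g0 : 0 < g0 -> exists2 C, 0 < C &
  forall g, `|g - g0| <= g0 / 2 -> 0 < g /\ `|II g - II g0| <= C * `|g - g0|.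
Proof.
move=> g0p.
have Kp : 0 < KK by rewrite /KK expR_gt0.
have I0 := II_ge0 g0p.
pose c0 := KK * g0 + II g0 + 1.
pose M := II g0 + g0 / 2 + c0.
pose B := KK * (2 * g0) + M + 1.
have k1 : 0 < KK * g0 by rewrite mulr_gt0.
have k2 : 0 < KK * (2 * g0) by rewrite !mulr_gt0.
have Bp : 0 < B by rewrite /B /M /c0; lra.
have B2 : 0 < 2 * B / g0 by rewrite divr_gt0 // mulr_gt0.
exists (1 + 2 * B / g0); first lra.
move=> g hg.
have D0 : 0 <= `|g - g0| by [].
have [gl gu] : g0 / 2 <= g /\ g <= 2 * g0.
  move: hg; rewrite ler_norml => /andP[]; lra.
have gp : 0 < g by lra.
split=> //.
set D := `|g - g0|.
set q := 2 * D / g0.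
have q0 : 0 <= q by rewrite /q; apply: divr_ge0; [apply: mulr_ge0|apply: ltW].
have q1 : q <= 1 by rewrite /q ler_pdivrMr // mul1r; move: hg; rewrite -/D; lra.
have Lq : `|ln g - ln g0| <= q by exact: ln_lip.
have Lq' : `|ln g0 - ln g| <= q by rewrite distrC.
have up := B1 g0p gp.
have lo := B1 gp g0p.
rewrite -/D -/c0 in up. rewrite distrC -/D in lo.
have c0p : 0 <= c0 by rewrite /c0; lra.
have h1 : c0 * `|ln g0 - ln g| <= c0 * q by rewrite ler_wpM2l.
have h1' : c0 * q <= c0 by rewrite ler_piMr.
have hgD : D <= g0 / 2 by [].
have IgM : II g <= M by rewrite /M; lra.
have Kg : KK * g <= KK * (2 * g0) by rewrite ler_wpM2l // ltW.
have Igp := II_ge0 gp.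
have h2 : (KK * g + II g + 1) * `|ln g - ln g0| <= B * q.
  have k3 : 0 < KK * g by rewrite mulr_gt0.
  apply: ler_pM => //; first lra.
  rewrite /B; lra.
have cB : c0 <= B by rewrite /B /M; lra.
have h3 : c0 * q <= B * q by rewrite ler_wpM2r.
have -> : (1 + 2 * B / g0) * D = D + B * q by rewrite /q; field; rewrite gt_eqF.
rewrite ler_norml; apply/andP; split; lra.
Qed.

Lemma fF_pos g : 0 < g -> fF F g = (- II g)%:E.
Proof. by move=> g0; change ((- ereal_inf (SS g))%E = (- II g)%:E); rewrite IIE. Qed.

Lemma near_d (x d : R) (P : R -> Prop) : 0 < d ->
  (forall y, `|y - x| < d -> P y) -> \forall y \near x, P y.
Proof.
move=> d0 H; apply/nbhs_ballP; exists d => //= y; rewrite -ball_normE /= distrC; exact: H.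
Qed.

Lemma fF_cont g0 : 0 < g0 -> {for g0, continuous (fF F)}.
Proof.
move=> g0p; have [C C0 HC] := II_lip g0p.
rewrite /prop_for /continuous_at (fF_pos g0p).
apply/fine_cvgP; split.
  apply: (@near_d g0 (g0 / 2)); first by rewrite divr_gt0.
  move=> y hy; have [yp _] := HC y (ltW hy); by rewrite fF_pos.
apply/cvgrPdist_lt => e e0.
have d0 : 0 < Num.min (g0 / 2) (e / C) by rewrite lt_min !divr_gt0.
apply: (near_d d0) => y hy.
move: hy; rewrite lt_min => /andP[h1 h2].
have [yp hl] := HC y (ltW h1).
rewrite /= fF_pos //= distrC opprK addrC.
rewrite distrC; apply: le_lt_trans hl _.
by rewrite mulrC -ltr_pdivlMr.
Qed.

Lemma II_glb g X : 0 < g -> (forall a, F a -> 0 <= a -> X <= hh g a) -> X <= II g.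
Proof.
move=> g0 H; apply/ler_addgt0Pr => e e0.
have [a [Fa ap ha]] := II_adh g0 e0.
have := H a Fa ap; lra.
Qed.

Lemma hh_far g a d : 0 < g -> g <= d -> d <= a -> - d + d * ln (d / g) <= hh g a.
Proof.
move=> g0 gd da.
have d0 : 0 < d by exact: lt_le_trans g0 gd.
have a0' : 0 < a by exact: lt_le_trans d0 da.
have e : ln (a / g) = ln (a / d) + ln (d / g).
  by rewrite !ln_div ?posrE //; lra.
have h1 := alnge a0' d0.
have l0 : 0 <= ln (d / g) by apply: ln_ge0; rewrite ler_pdivlMr // mul1r.
have h2 : d * ln (d / g) <= a * ln (d / g) by rewrite ler_wpM2r.
rewrite /hh e mulrDr; lra.
Qed.

Lemma II_big d : 0 < d -> (forall a, F a -> 0 <= a -> d <= a) ->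
  forall M, exists2 eta, 0 < eta & forall y, 0 < y -> y < eta -> M < II y.
Proof.
move=> d0 Hd M.
pose t := (M + d) / d.
have w0 : 0 < d * expR (- t) by rewrite mulr_gt0 // expR_gt0.
exists (Num.min d (d * expR (- t))); first by rewrite lt_min d0 w0.
move=> y y0; rewrite lt_min => /andP[yd yw].
have lb : - d + d * ln (d / y) <= II y.
  apply: II_glb => // a Fa ap; apply: hh_far => //; [exact: ltW | exact: Hd].
have lt : t < ln (d / y).
  rewrite -[t]expRK ltr_ln ?posrE ?expR_gt0 ?divr_gt0 //.
  rewrite ltr_pdivlMr // mulrC -ltr_pdivlMr ?expR_gt0 //.
  by rewrite -expRN.
have : d * t < d * ln (d / y) by rewrite ltr_pM2l.
have -> : d * t = M + d by rewrite /t mulrC -mulrA mulVf ?gt_eqF // mulr1.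
lra.
Qed.
End S.

Lemma fF_ninf (R : realType) (F : set R) g : (forall a, F a -> a < 0) -> fF F g = -oo%E.
Proof.
move=> H; rewrite /fF; have -> : ereal_inf [set ell g a | a in F] = +oo%E.
  by apply/ereal_inf_pinfty => _ [a Fa <-]; rewrite ell_neg //; exact: H.
by [].
Qed.

Lemma fF0_in (R : realType) (F : set R) : F 0 -> fF F 0 = 0%E.
Proof.
move=> F0; rewrite /fF; apply/eqP; rewrite eqe_oppLR oppe0; apply/eqP/le_anti/andP; split.
  by apply: ereal_inf_lbound; exists 0 => //; rewrite /ell ltxx eqxx.
apply: le_ereal_inf_tmp => _ [a Fa <-]; rewrite /ell.
case: ltP => // a0; case: eqP => // an0.
by rewrite eqxx.
Qed.

Lemma fF0_out (R : realType) (F : set R) : ~ F 0 -> fF F 0 = -oo%E.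
Proof.
move=> nF0; rewrite /fF; have -> : ereal_inf [set ell 0 a | a in F] = +oo%E.
  apply/ereal_inf_pinfty => _ [a Fa <-]; rewrite /ell.
  case: ltP => // _; case: eqP => [a0|_]; first by rewrite a0 in Fa.
  by rewrite eqxx.
by [].
Qed.

Lemma closed_delta (R : realType) (F : set R) : closed F -> ~ F 0 ->
  exists2 d, 0 < d & forall a, F a -> d <= `|a|.
Proof.
move=> hF nF0.
have H : ~ (forall d, 0 < d -> exists a, F a /\ `|a| < d).
  move=> H; apply: nF0; apply: hF => B /nbhs_ballP [d d0 sB].
  have [a [Fa ha]] := H d d0; exists a; split => //; apply: sB.
  by rewrite -ball_normE /= sub0r normrN.
case: (pselect (exists2 d, 0 < d & forall a, F a -> d <= `|a|)) => // K.
exfalso; apply: H => d d0; apply: contrapT => hne; apply: K; exists d => // a Fa.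
rewrite leNgt; apply/negP => hlt; apply: hne; by exists a.
Qed.

Theorem proposition6 (R : realType) (F : set R) (hF : closed F) :
  (F `<=` `]-oo, 0[ -> forall g : R, 0 <= g -> fF F g = -oo%E) /\
  (F `&` `[0, +oo[ !=set0 ->
     (forall g : R, 0 < g -> fF F g \is a fin_num) /\
     (forall g : R, 0 < g -> {for g, continuous (fF F)}) /\
     (fF F g @[g --> 0^'+] --> fF F 0) /\
     (F 0 -> fF F 0 = 0%E) /\ (~ F 0 -> fF F 0 = -oo%E)) /\
  (forall a b : R, a <= 0 -> b <= 0 -> a <= b ->
     closed [set g : R | 0 <= g /\ (a%:E <= fF F g <= b%:E)%E]).
Proof.
split.
  move=> sub g _; apply: fF_ninf => a Fa; have := sub a Fa.
  by rewrite /= in_itv /=.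
split.
  move=> [c [Fc]]; rewrite /= in_itv /= andbT => cp.
  split; first by move=> g g0; rewrite (fF_pos Fc cp g0).
  split; first by move=> g g0; exact: (fF_cont Fc cp g0).
  split; last by split; [exact: fF0_in | exact: fF0_out].
  case: (pselect (F 0)) => F0.
    rewrite fF0_in //; apply/fine_cvgP; split.
      near=> g; have g0 : 0 < g by near: g; exact: nbhs_right_gt.
      by rewrite (fF_pos Fc cp g0).
    apply/cvgrPdist_lt => e e0; near=> g.
    have g0 : 0 < g by near: g; exact: nbhs_right_gt.
    have ge : g < e by near: g; exact: nbhs_right_lt.
    rewrite /= (fF_pos Fc cp g0) /= sub0r normrN normrN ger0_norm ?(II_ge0 Fc cp g0) //.
    have := II_le Fc cp g0 F0 (lexx 0); rewrite /hh mul0r; lra.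
  rewrite fF0_out //.
  have [d d0 Hd] := closed_delta hF F0.
  have Hd' : forall a, F a -> 0 <= a -> d <= a.
    by move=> a Fa ap; rewrite -(ger0_norm ap); exact: Hd.
  apply/cvgeNyPle => A.
  have [eta eta0 H] := II_big Fc cp d0 Hd' (- A).
  near=> g.
  have g0 : 0 < g by near: g; exact: nbhs_right_gt.
  have ge : g < eta by near: g; exact: nbhs_right_lt.
  rewrite (fF_pos Fc cp g0) lee_fin; have := H g g0 ge; lra.
move=> a b a0 b0 ab x clx.
have P : forall eta, 0 < eta -> exists y, [/\ 0 <= y, (a%:E <= fF F y)%E, (fF F y <= b%:E)%E & `|y - x| < eta].
  move=> eta eta0; have [y [[y0 /andP[h1 h2]] hy]] := clx _ (nbhsx_ballx x eta eta0).
  by exists y; split => //; move: hy; rewrite -ball_normE /= distrC.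
have x0 : 0 <= x.
  rewrite leNgt; apply/negP => xn.
  have [y [y0 _ _ hy]] := P (- x) (ltac:(lra)).
  have := ler_norm (y - x); lra.
case: (pselect (exists c, F c /\ 0 <= c)) => [[c [Fc cp]]|nc]; last first.
  have neg : forall z, F z -> z < 0.
    move=> z Fz; rewrite ltNge; apply/negP => hz; apply: nc; by exists z.
  have [y [_ h _ _]] := P 1 ltr01.
  by rewrite fF_ninf in h.
split => //=.
move: x0; rewrite le_eqVlt => /orP[/eqP x0|xp].
  subst x.
  case: (pselect (F 0)) => F0.
    rewrite fF0_in // !lee_fin a0 /=.
    apply/ler_addgt0Pr => e e0.
    have [y [y0 h1 h2 hy]] := P e e0.
    move: y0; rewrite le_eqVlt => /orP[/eqP y0|yp].
      subst y; move: h2; rewrite fF0_in // lee_fin; lra.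
    move: h2; rewrite (fF_pos Fc cp yp) lee_fin => h2.
    have h3 := II_le Fc cp yp F0 (lexx 0).
    have h4 : hh y 0 = y by rewrite /hh mul0r subr0 addr0.
    have h5 : y < e by move: hy; rewrite subr0 ger0_norm // ltW.
    lra.
  exfalso.
  have [d d0 Hd] := closed_delta hF F0.
  have Hd' : forall a, F a -> 0 <= a -> d <= a.
    by move=> z Fz zp; rewrite -(ger0_norm zp); exact: Hd.
  have [eta eta0 H] := II_big Fc cp d0 Hd' (- a).
  have [y [y0 h1 h2 hy]] := P eta eta0.
  move: y0; rewrite le_eqVlt => /orP[/eqP y0|yp].
    by subst y; move: h1; rewrite fF0_out.
  move: h1; rewrite (fF_pos Fc cp yp) lee_fin => h1.
  have h5 : y < eta by move: hy; rewrite subr0 ger0_norm // ltW.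
  have := H y yp h5; lra.
have [C C0 HC] := II_lip Fc cp xp.
have Q : forall e, 0 < e -> exists y, [/\ a <= - II F y, - II F y <= b & `|II F y - II F x| < e].
  move=> e e0.
  have m0 : 0 < Num.min (x / 2) (e / C) by rewrite lt_min !divr_gt0.
  have [y [y0 h1 h2 hy]] := P _ m0.
  move: hy; rewrite lt_min => /andP[hy1 hy2].
  have [yp hl] := HC y (ltW hy1).
  move: h1 h2; rewrite (fF_pos Fc cp yp) !lee_fin => h1 h2.
  exists y; split => //; apply: le_lt_trans hl _.
  by rewrite mulrC -ltr_pdivlMr.
rewrite (fF_pos Fc cp xp) !lee_fin; apply/andP; split.
  apply/ler_addgt0Pr => e e0; have [y [h1 h2 h3]] := Q e e0.
  have := ler_norm (II F x - II F y); rewrite distrC; lra.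
apply/ler_addgt0Pr => e e0; have [y [h1 h2 h3]] := Q e e0.
have := ler_norm (II F y - II F x); lra.
Unshelve. all: by end_near.
Qed.
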